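(* Let $N\ge2$, $\Lambda_0>0$, and let $\lambda:\mathbb R\to[0,\Lambda_0]$ be a nonincreasing measurable function. Let $c_1,c_2>0$ satisfy $c_1\Lambda_0\le1/2$ and $c_2\Lambda_0\le(N-1)/2$, and put $M=N-c_2\Lambda_0$. Then for all $s,t\in\mathbb R$, $$\int_{-\infty}^\infty\!\int_{-\infty}^\infty E(t,\tau,\sigma)\,\Sigma^+(s,\sigma)\,d\sigma\,d\tau\le c\,\Sigma^+(s,t),\qquad \int_{-\infty}^\infty\!\int_{-\infty}^\infty E(t,\tau,\sigma)\,\Sigma^-(\sigma,s)\,d\sigma\,d\tau\le c\,\Sigma^-(t,s),$$ where $c=2\big(\frac{3\Lambda_0}{M}+\frac1{c_1}+\frac1{c_2}\big)^2$.
   Context: For $m,n\ge0$, $Q^{m,n}(t)=t^m$ for $0<t\le1$ and $Q^{m,n}(t)=t^n$ for $t>1$. Define $E(\tau,\sigma)=\lambda(\tau)^2e^{N(\tau-\sigma)}$ if $\tau\le\sigma$ and $E(\tau,\sigma)=\lambda(\tau)\big(\lambda(\tau)e^{\sigma-\tau}+\lambda(\sigma)\big)$ if $\tau\ge\sigma$, and $E(t,\tau,\sigma)=Q^{N,0}(e^{t-\tau})\,E(\tau,\sigma)$. Define $\Sigma^{\pm}(s,\sigma)=\exp\big(\pm c_1\int_s^\sigma\lambda(\nu)\,d\nu\big)$ if $s\le\sigma$ and $\Sigma^{\pm}(s,\sigma)=\exp\big(\pm M(\sigma-s)\big)$ if $s\ge\sigma$. (In the paper $\lambda(\nu)=\Lambda(e^{-\nu})$,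 where $\Lambda$ is an increasing local Lipschitz modulus bounded by $\Lambda_0$.) *)

(* Defs.v *)
From Stdlib Require Import Reals Lra Classical ClassicalEpsilon.
Open Scope R_scope.

(* Total Riemann integral on [a,b] (oriented, as RiemannInt):
   the Riemann integral if f is Riemann integrable on [a,b], 0 otherwise. *)
Definition RInt (f : R -> R) (a b : R) : R :=
  match excluded_middle_informative (exists _ : Riemann_integrable f a b, True) with
  | left H => RiemannInt (proj1_sig (constructive_indefinite_description _ H))
  | right _ => 0
  end.

Definition Q (m n : nat) (t : R) : R := if Rle_dec t 1 then t ^ m else t ^ n.

Definition E2 (lam : R -> R) (N : nat) (tau sigma : R) : R :=
  if Rle_dec tau sigma then (lam tau)^2 * exp (INR N * (tau - sigma))
  else lam tau * (lam tau * exp (sigma - tau) + lam sigma).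

Definition E3 (lam : R -> R) (N : nat) (t tau sigma : R) : R :=
  Q N 0 (exp (t - tau)) * E2 lam N tau sigma.

(* Sigma^{+} (sgn = 1) and Sigma^{-} (sgn = -1) *)
Definition Sig (lam : R -> R) (c1 M sgn : R) (s sigma : R) : R :=
  if Rle_dec s sigma then exp (sgn * c1 * RInt lam s sigma)
  else exp (sgn * M * (sigma - s)).

(* Double improper integral over R^2 of a nonnegative function g(tau,sigma),
   bounded by C: every compact box iterated integral is <= C. *)
Definition dbl_int_le (g : R -> R -> R) (C : R) : Prop :=
  forall a b c d : R, a <= b -> c <= d ->
    RInt (fun tau => RInt (fun sigma => g tau sigma) c d) a b <= C.

(* Main.v *)
Require Import Defs.
From Stdlib Require Import Reals Lra Lia Classical ClassicalEpsilon.
From Coquelicot Require Import Coquelicot.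
Open Scope R_scope.

Lemma adapted_piece (g : R -> R) (u v cst : R) :
  u < v -> (forall x, u < x < v -> g x = cst) ->
  adapted_couple g u v (cons u (cons v nil)) (cons cst nil).
Proof.
  intros Huv Hg. unfold adapted_couple. repeat split.
  - unfold RList.ordered_Rlist. intros i Hi. simpl in Hi. assert (i = 0%nat) by lia. subst. simpl. lra.
  - simpl. unfold Rmin. destruct (Rle_dec u v); lra.
  - simpl. unfold Rmax. destruct (Rle_dec u v); lra.
  - intros i Hi. simpl in Hi. assert (i = 0%nat) by lia. subst. simpl.
    unfold constant_D_eq, open_interval. intros x Hx. apply Hg. exact Hx.
Qed.

Definition piece_SF (g : R -> R) (u v cst : R) (Huv : u < v)
  (Hg : forall x, u < x < v -> g x = cst) : IsStepFun g u v :=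
  existT _ (cons u (cons v nil)) (existT _ (cons cst nil) (adapted_piece g u v cst Huv Hg)).

Lemma piece_int (g : R -> R) (u v cst : R) (Huv : u < v)
  (Hg : forall x, u < x < v -> g x = cst) :
  RiemannInt_SF (mkStepFun (piece_SF g u v cst Huv Hg)) = cst * (v - u).
Proof.
  unfold RiemannInt_SF. destruct (Rle_dec u v) as [_|n]; [|lra].
  simpl. ring.
Qed.

Lemma steps (g : R -> R) (a d : R) (val : nat -> R) :
  0 < d ->
  (forall k x, a + INR k * d < x < a + INR (S k) * d -> g x = val k) ->
  forall n, {pr : IsStepFun g a (a + INR (S n) * d) &
             RiemannInt_SF (mkStepFun pr) = d * sum_f_R0 val n}.
Proof.
  intros Hd Hg. induction n as [|n IH].
  - assert (H1 : a < a + INR 1 * d) by (change (INR 1) with 1; lra).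
    assert (Hg0 : forall x, a < x < a + INR 1 * d -> g x = val 0%nat).
    { intros x Hx. apply Hg. change (INR 0) with 0; change (INR 1) with 1 in Hx |- *. lra. }
    exists (piece_SF g _ _ (val 0%nat) H1 Hg0).
    rewrite piece_int. simpl. ring.
  - destruct IH as [pr Hpr].
    assert (H1 : a + INR (S n) * d < a + INR (S (S n)) * d).
    { rewrite (S_INR (S n)). lra. }
    set (p2 := piece_SF g _ _ (val (S n)) H1 (Hg (S n))).
    assert (Ha : a <= a + INR (S n) * d).
    { assert (0 <= INR (S n)) by apply pos_INR. nra. }
    exists (StepFun_P41 Ha (Rlt_le _ _ H1) pr p2).
    rewrite <- (StepFun_P43 pr p2). rewrite Hpr.
    change (RiemannInt_SF {| fe := g; pre := p2 |}) with (RiemannInt_SF (mkStepFun p2)).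
    unfold p2. rewrite piece_int, tech5. rewrite (S_INR (S n)). ring.
Qed.

Definition fl (a d x : R) : R := a + d * IZR (Int_part ((x - a) / d)).

Lemma fl_spec a d x : 0 < d -> fl a d x <= x < fl a d x + d.
Proof.
  intros Hd. unfold fl. destruct (base_Int_part ((x - a)/d)) as [H1 H2].
  set (z := IZR (Int_part ((x - a) / d))) in *.
  assert (E : d * ((x - a)/d) = x - a) by (field; lra).
  split; nra.
Qed.

Lemma fl_open a d x k : 0 < d -> a + INR k * d < x < a + INR (S k) * d ->
  fl a d x = a + INR k * d.
Proof.
  intros Hd Hx. unfold fl.
  assert (Hr : INR k < (x - a)/d < INR k + 1).
  { rewrite S_INR in Hx. split.
    - apply (Rmult_lt_reg_r d); [lra|]. unfold Rdiv. rewrite Rmult_assoc, Rinv_l; lra.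
    - apply (Rmult_lt_reg_r d); [lra|]. unfold Rdiv. rewrite Rmult_assoc, Rinv_l; lra. }
  assert (Hu : (Z.of_nat k + 1)%Z = up ((x - a)/d)).
  { apply tech_up; rewrite plus_IZR, <- INR_IZR_INZ; simpl; lra. }
  unfold Int_part. rewrite <- Hu.
  replace (Z.of_nat k + 1 - 1)%Z with (Z.of_nat k) by lia.
  rewrite <- INR_IZR_INZ. ring.
Qed.

Lemma telesc (h : R -> R) (a d : R) n :
  sum_f_R0 (fun k => h (a + INR k * d) - h (a + INR (S k) * d)) n
  = h a - h (a + INR (S n) * d).
Proof.
  induction n as [|n IH].
  - simpl. replace (a + 0 * d) with a by ring. ring.
  - rewrite tech5, IH. ring.
Qed.

Lemma mono_RI (f : R -> R) (a b : R) :
  (forall x y, x <= y -> f y <= f x) -> a <= b -> Riemann_integrable f a b.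
Proof.
  intros Hf Hab. destruct (Rle_lt_or_eq_dec a b Hab) as [Hlt|E].
  2:{ subst. apply RiemannInt_P7. }
  intro eps.
  assert (Hfab : 0 <= f a - f b) by (assert (H := Hf a b Hab); lra).
  destruct (constructive_indefinite_description _
     (INR_unbounded ((b - a) * (f a - f b) / eps))) as [n Hn].
  set (d := (b - a) / INR (S n)).
  assert (HSn : 0 < INR (S n)) by (apply lt_0_INR; lia).
  assert (Hd : 0 < d) by (unfold d; apply Rdiv_lt_0_compat; lra).
  assert (Heq : a + INR (S n) * d = b) by (unfold d; field; lra).
  set (phi := fun x => f (fl a d x)).
  set (psi := fun x => f (fl a d x) - f (fl a d x + d)).
  destruct (steps phi a d (fun k => f (a + INR k * d)) Hd) with (n := n) as [prphi _].
  { intros k x Hx. unfold phi. rewrite (fl_open a d x k Hd Hx). reflexivity. }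
  destruct (steps psi a d (fun k => f (a + INR k * d) - f (a + INR (S k) * d)) Hd) with (n := n)
    as [prpsi Hpsi].
  { intros k x Hx. unfold psi. rewrite (fl_open a d x k Hd Hx), S_INR. f_equal. f_equal. ring. }
  rewrite telesc in Hpsi.
  assert (Hdn : d * INR (S n) = b - a) by (unfold d; field; lra).
  clearbody d. subst b.
  exists (mkStepFun prphi). exists (mkStepFun prpsi). split.
  - intros t _. simpl. unfold phi, psi. destruct (fl_spec a d t Hd) as [H1 H2].
    assert (f t <= f (fl a d t)) by (apply Hf; lra).
    assert (f (fl a d t + d) <= f t) by (apply Hf; lra).
    rewrite Rabs_left1; lra.
  - rewrite Hpsi. rewrite Rabs_right by nra.
    assert (Hep : 0 < pos eps) by apply cond_pos.
    set (K := f a - f (a + INR (S n) * d)) in *.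
    set (m := INR (S n)) in *.
    assert (Hn' : INR n < m) by (unfold m; apply lt_INR; lia).
    replace (a + m * d - a) with (d * m) in Hn by ring.
    assert (d * m * K / eps * eps = d*m*K) by (field; lra).
    assert (d * K * m < eps * m) by nra.
    nra.
Qed.

Lemma DR_eq f a b : ex_RInt f a b -> Defs.RInt f a b = RInt f a b.
Proof.
  intros H. unfold Defs.RInt.
  destruct (excluded_middle_informative _) as [H1|H1].
  - rewrite (RInt_Reals f a b (proj1_sig (constructive_indefinite_description _ H1))). reflexivity.
  - exfalso. apply H1. exists (ex_RInt_Reals_0 f a b H). exact I.
Qed.

Lemma DR_ne f a b : ~ ex_RInt f a b -> Defs.RInt f a b = 0.
Proof.
  intros H. unfold Defs.RInt.
  destruct (excluded_middle_informative _) as [H1|H1]; [|reflexivity].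
  exfalso. destruct H1 as [pr _]. apply H. apply ex_RInt_Reals_1. exact pr.
Qed.

Lemma ex_sub (f : R -> R) x y u v : x <= u -> u <= v -> v <= y -> ex_RInt f x y -> ex_RInt f u v.
Proof.
  intros H1 H2 H3 H. apply (ex_RInt_Chasles_2 f x u v). lra.
  apply (ex_RInt_Chasles_1 f x v y). lra. exact H.
Qed.

Lemma RInt_split (f : R -> R) u m v : ex_RInt f u m -> ex_RInt f m v ->
  RInt f u v = RInt f u m + RInt f m v.
Proof. intros H1 H2. rewrite <- (RInt_Chasles f u m v H1 H2). reflexivity. Qed.

Lemma RInt_affine (lam : R -> R) (u v al be : R) : ex_RInt lam u v ->
  ex_RInt (fun s => al + be * lam s) u v /\
  RInt (fun s => al + be * lam s) u v = al * (v - u) + be * RInt lam u v.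
Proof.
  intros H.
  assert (Hi : is_RInt (fun s => al + be * lam s) u v (al * (v - u) + be * RInt lam u v)).
  { apply (is_RInt_plus (fun _ => al) (fun s => be * lam s)).
    - assert (H0 := @is_RInt_const R_NormedModule u v al).
      replace (al * (v - u)) with (scal (v - u) al). exact H0.
      unfold scal; simpl; unfold mult; simpl. ring.
    - assert (H0 := @RInt_correct R_CompleteNormedModule lam u v H).
      exact (@is_RInt_scal R_NormedModule lam u v be _ H0). }
  split. exists (al * (v - u) + be * RInt lam u v). exact Hi.
  apply is_RInt_unique. exact Hi.
Qed.

Lemma LG (lam f Phi : R -> R) (x y K : R) :
  (forall u v, ex_RInt lam u v) ->
  x <= y -> ex_RInt f x y ->
  (forall u v, x <= u -> u <= v -> v <= y -> exists al be,
      (forall s, u < s < v -> f s <= al + be * lam s) /\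
      al * (v - u) + be * RInt lam u v <= Phi v - Phi u + K * (v - u)^2) ->
  RInt f x y <= Phi y - Phi x.
Proof.
  intros Hlam Hxy Hf Hloc.
  assert (S1 : forall u v, x <= u -> u <= v -> v <= y ->
     RInt f u v <= Phi v - Phi u + K * (v - u)^2).
  { intros u v H1 H2 H3. destruct (Hloc u v H1 H2 H3) as [al [be [Hb Hc]]].
    destruct (RInt_affine lam u v al be (Hlam u v)) as [Ha He].
    eapply Rle_trans; [|exact Hc]. rewrite <- He.
    apply RInt_le. exact H2. apply (ex_sub f x y); auto. exact Ha.
    intros s Hs. apply Hb. exact Hs. }
  assert (S2 : forall n u v, x <= u -> u <= v -> v <= y ->
     RInt f u v <= Phi v - Phi u + K * (v - u)^2 / 2 ^ n).
  { induction n as [|n IH]; intros u v H1 H2 H3.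
    - rewrite pow_O, Rdiv_1_r. apply S1; assumption.
    - set (m := (u + v) / 2).
      rewrite (RInt_split f u m v).
      2,3: apply (ex_sub f x y); unfold m; auto; lra.
      assert (Hm1 : u <= m) by (unfold m; lra).
      assert (Hm2 : m <= v) by (unfold m; lra).
      assert (A1 := IH u m H1 Hm1 ltac:(lra)).
      assert (A2 := IH m v ltac:(lra) Hm2 H3).
      assert (E : K * (m - u) ^ 2 / 2 ^ n + K * (v - m) ^ 2 / 2 ^ n = K * (v - u) ^ 2 / 2 ^ S n).
      { unfold m. simpl. field. apply pow_nonzero. lra. }
      lra. }
  apply Rnot_lt_le. intros Hc.
  set (e := RInt f x y - (Phi y - Phi x)).
  assert (He : 0 < e) by (unfold e; lra).
  destruct (INR_unbounded (Rabs (K * (y - x)^2) / e)) as [n Hn].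
  assert (Hp : INR n < 2 ^ n).
  { clear. induction n as [|n IH]. simpl. lra. rewrite S_INR. simpl.
    assert (1 <= 2 ^ n) by (apply pow_R1_Rle; lra). lra. }
  assert (H := S2 n x y ltac:(lra) Hxy ltac:(lra)).
  assert (Hpos : 0 < 2 ^ n) by (apply pow_lt; lra).
  assert (K * (y - x) ^ 2 / 2 ^ n < e).
  { apply (Rmult_lt_reg_r (2 ^ n)); auto.
    replace (K * (y - x) ^ 2 / 2 ^ n * 2 ^ n) with (K * (y - x) ^ 2) by (field; lra).
    assert (K * (y - x)^2 <= Rabs (K * (y - x)^2)) by apply Rle_abs.
    assert (Rabs (K * (y - x) ^ 2) / e * e = Rabs (K * (y - x) ^ 2)) by (field; lra).
    nra. }
  unfold e in *. lra.
Qed.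

Definition Lgood (lam : R -> R) (L : R) :=
  (forall x, 0 <= lam x <= L) /\ (forall x y, x <= y -> lam y <= lam x).

Definition Wgood (lam : R -> R) (c1 M : R) (w : R -> R) :=
  (forall x, 0 < w x) /\
  (forall x y, x <= y -> w x * exp (c1 * RInt lam x y) <= w y) /\
  (forall x y, x <= y -> w y <= w x * exp (M * (y - x))).

Lemma lam_ex lam L : Lgood lam L -> forall u v, ex_RInt lam u v.
Proof.
  intros [H1 H2] u v. destruct (Rle_dec u v).
  - apply ex_RInt_Reals_1. apply mono_RI; auto.
  - apply ex_RInt_swap. apply ex_RInt_Reals_1. apply mono_RI; auto. lra.
Qed.

Lemma lam_bnd lam L u v : Lgood lam L -> u <= v -> 0 <= RInt lam u v <= L * (v - u).
Proof.
  intros HL Huv. assert (Hex := lam_ex lam L HL u v). destruct HL as [H1 H2].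
  split.
  - assert (H := RInt_le (fun _ => 0) lam u v Huv (ex_RInt_const u v 0) Hex
      ltac:(intros; apply H1)).
    rewrite RInt_const in H. unfold scal in H; simpl in H; unfold mult in H; simpl in H. lra.
  - assert (H := RInt_le lam (fun _ => L) u v Huv Hex (ex_RInt_const u v L)
      ltac:(intros; apply H1)).
    rewrite RInt_const in H. unfold scal in H; simpl in H; unfold mult in H; simpl in H. lra.
Qed.

Lemma e1 z : 1 + z <= exp z.
Proof. apply exp_ineq1_le. Qed.

Lemma e2 z : 0 <= z -> exp z - 1 <= z * exp z.
Proof.
  intros Hz. assert (H := e1 (- z)). assert (Hp := exp_pos z).
  assert (exp (-z) * exp z = 1) by (rewrite <- exp_plus; replace (-z+z) with 0 by ring; apply exp_0).
  nra.
Qed.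

Lemma e3 z : 1 - exp (- z) <= z.
Proof. assert (H := e1 (- z)). lra. Qed.

Lemma e4 z : z * exp (- z) <= 1 - exp (- z).
Proof.
  assert (H := e1 z). assert (Hp := exp_pos (-z)).
  assert (exp (-z) * exp z = 1) by (rewrite <- exp_plus; replace (-z+z) with 0 by ring; apply exp_0).
  nra.
Qed.

Lemma exp_le_exp x y : x <= y -> exp x <= exp y.
Proof. intros H. destruct (Rle_lt_or_eq_dec x y H) as [H'|H']. left; apply exp_increasing; auto. subst; lra. Qed.

Lemma w_mono lam L c1 M w x y : Lgood lam L -> Wgood lam c1 M w -> 0 < c1 ->
  x <= y -> w x <= w y.
Proof.
  intros HL [Hp [Hl Hu]] Hc Hxy. assert (H := Hl x y Hxy).
  assert (H0 := lam_bnd lam L x y HL Hxy). assert (H1 := e1 (c1 * RInt lam x y)).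
  assert (H2 := Hp x). assert (0 <= c1 * RInt lam x y) by nra.
  assert (1 <= exp (c1 * RInt lam x y)) by lra. nra.
Qed.

Lemma w_low lam L c1 M w u v : Lgood lam L -> Wgood lam c1 M w ->
  u <= v -> w u * (1 + c1 * RInt lam u v) <= w v.
Proof.
  intros HL [Hp [Hl Hu]] Huv. assert (H := Hl u v Huv).
  assert (H1 := e1 (c1 * RInt lam u v)). assert (H2 := Hp u). nra.
Qed.

Lemma w_lip lam L c1 M w x y u v : Lgood lam L -> Wgood lam c1 M w -> 0 < c1 -> 0 <= M ->
  x <= u -> u <= v -> v <= y ->
  w v - w u <= (w y * M * exp (M * (y - x))) * (v - u).
Proof.
  intros HL HW Hc HM H1 H2 H3. pose proof HW as [Hp [Hl Hu]].
  assert (A := Hu u v H2). assert (B := e2 (M * (v - u)) ltac:(nra)).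
  assert (C := w_mono lam L c1 M w u y HL HW Hc ltac:(lra)).
  assert (D : exp (M * (v - u)) <= exp (M * (y - x))) by (apply exp_le_exp; nra).
  assert (E := Hp u). assert (F := exp_pos (M * (v - u))).
  assert (G : w u * (exp (M * (v - u)) - 1) <= w y * (M * (v - u) * exp (M * (y - x)))).
  { assert (0 <= M * (v - u)) by nra. assert (I := e1 (M * (v - u))).
    assert (M * (v - u) * exp (M * (v - u)) <= M * (v - u) * exp (M * (y - x))) by
      (apply Rmult_le_compat_l; lra).
    apply Rmult_le_compat; lra. }
  nra.
Qed.

Lemma IT2 lam L c1 M w (f : R -> R) x y tau k k' :
  Lgood lam L -> Wgood lam c1 M w -> 0 < c1 -> 0 <= M -> 0 <= k -> 0 <= k' ->
  x <= y -> y <= tau -> ex_RInt f x y ->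
  (forall s, x < s < y -> f s <= k * exp (s - tau) * w s + k' * lam s * w s) ->
  RInt f x y <= k * w tau + k' * w y / c1.
Proof.
  intros HL HW Hc HM Hk Hk' Hxy Hyt Hf Hb.
  pose proof HW as [Hp [Hl Hu]]. pose proof HL as [HL1 HL2].
  set (Lip := w y * M * exp (M * (y - x))).
  eapply Rle_trans.
  - apply (LG lam f (fun s => k * exp (s - tau) * w s + k' * w s / c1) x y
             (k * w y + k' * Lip * L) (lam_ex lam L HL) Hxy Hf).
    intros u v H1 H2 H3.
    exists (k * exp (v - tau) * w v), (k' * w v). split.
    + intros s Hs. eapply Rle_trans. apply Hb; lra.
      assert (A1 : exp (s - tau) <= exp (v - tau)) by (apply exp_le_exp; lra).
      assert (A2 : w s <= w v) by (apply (w_mono lam L c1 M w); auto; lra).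
      assert (A3 := HL1 s). assert (A4 := Hp s). assert (A5 := exp_pos (s - tau)).
      assert (k * exp (s - tau) * w s <= k * exp (v - tau) * w v).
      { rewrite !Rmult_assoc. apply Rmult_le_compat_l; auto.
        apply Rmult_le_compat; lra. }
      assert (k' * lam s * w s <= k' * w v * lam s).
      { replace (k' * w v * lam s) with (k' * lam s * w v) by ring.
        apply Rmult_le_compat_l; [nra|lra]. }
      lra.
    + set (h := v - u). set (Lam := RInt lam u v).
      assert (HLam := lam_bnd lam L u v HL H2). fold Lam h in HLam.
      assert (Hlow := w_low lam L c1 M w u v HL HW H2). fold Lam in Hlow.
      assert (Hlip := w_lip lam L c1 M w x y u v HL HW Hc HM H1 H2 H3). fold Lip h in Hlip.
      assert (Hwu := Hp u). assert (Hwv := w_mono lam L c1 M w u v HL HW Hc H2).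
      assert (Hwy := w_mono lam L c1 M w v y HL HW Hc H3).
      assert (Hh : 0 <= h) by (unfold h; lra).
      set (P := exp (u - tau)).
      assert (HP : 0 < P) by apply exp_pos.
      assert (Ev : exp (v - tau) = P * exp h) by (unfold P, h; rewrite <- exp_plus; f_equal; ring).
      assert (HPe : P * exp h <= 1) by (rewrite <- Ev; rewrite <- exp_0; apply exp_le_exp; lra).
      assert (Ee1 := e1 h). assert (Ee2 := e2 h Hh). assert (Eh := exp_pos h).
      assert (T2 : k * exp (v - tau) * w v * h <=
                   k * exp (v - tau) * w v - k * exp (u - tau) * w u + k * w y * h ^ 2).
      { rewrite Ev. fold P.
        assert (X1 : P * h * w v <= P * exp h * w v - P * w u).
        { assert (P * (1 + h) * w v <= P * exp h * w v).
          { apply Rmult_le_compat_r; [lra|]. apply Rmult_le_compat_l; lra. }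
          assert (P * w u <= P * w v) by (apply Rmult_le_compat_l; lra). nra. }
        assert (X2 : P * exp h * w v * h - P * h * w v <= w y * h ^ 2).
        { assert (P * exp h * w v * h - P * h * w v = P * w v * h * (exp h - 1)) by ring.
          assert (P * w v * h * (exp h - 1) <= P * w v * h * (h * exp h)).
          { apply Rmult_le_compat_l; [|lra]. apply Rmult_le_pos; [|lra]. nra. }
          assert (P * w v * h * (h * exp h) = (P * exp h) * w v * h ^ 2) by ring.
          assert ((P * exp h) * w v * h ^ 2 <= 1 * w y * h ^ 2).
          { apply Rmult_le_compat_r. nra. apply Rmult_le_compat; try lra.
            apply Rmult_le_pos; lra. }
          lra. }
        assert (k * (P * exp h * w v * h - P * h * w v) <= k * (w y * h ^ 2)) by
          (apply Rmult_le_compat_l; lra).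
        assert (k * (P * h * w v) <= k * (P * exp h * w v - P * w u)) by
          (apply Rmult_le_compat_l; lra).
        nra. }
      assert (T1 : k' * w v * Lam <= k' * w v / c1 - k' * w u / c1 + k' * Lip * L * h ^ 2).
      { assert (Y1 : w u * Lam <= (w v - w u) / c1).
        { apply (Rmult_le_reg_l c1); auto. field_simplify; [|lra]. nra. }
        assert (Y2 : (w v - w u) * Lam <= Lip * h * (L * h)).
        { apply Rmult_le_compat; try lra. }
        assert (k' * (w u * Lam) <= k' * ((w v - w u) / c1)) by (apply Rmult_le_compat_l; lra).
        assert (k' * ((w v - w u) * Lam) <= k' * (Lip * h * (L * h))) by (apply Rmult_le_compat_l; lra).
        assert (k' * w v / c1 - k' * w u / c1 = k' * ((w v - w u) / c1)) by (field; lra).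
        assert (k' * w v * Lam = k' * (w u * Lam) + k' * ((w v - w u) * Lam)) by ring.
        assert (k' * (Lip * h * (L * h)) = k' * Lip * L * h ^ 2) by ring.
        lra. }
      fold h. cbv beta. fold P in T2. lra.
  - assert (Z1 : exp (y - tau) <= 1) by (rewrite <- exp_0; apply exp_le_exp; lra).
    assert (Z2 := w_mono lam L c1 M w y tau HL HW Hc Hyt).
    assert (Z3 := Hp x). assert (Z4 := Hp y). assert (Z5 := exp_pos (x - tau)). assert (Z6 := exp_pos (y - tau)).
    assert (k * exp (y - tau) * w y <= k * w tau).
    { rewrite Rmult_assoc. apply Rmult_le_compat_l; auto.
      assert (exp (y - tau) * w y <= 1 * w tau) by (apply Rmult_le_compat; lra). lra. }
    assert (0 <= k * exp (x - tau) * w x) by (apply Rmult_le_pos; [apply Rmult_le_pos|]; lra).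
    assert (0 < / c1) by (apply Rinv_0_lt_compat; lra).
    assert (0 <= k' * w x / c1) by (unfold Rdiv; apply Rmult_le_pos; [apply Rmult_le_pos|]; lra).
    lra.
Qed.

Lemma IT3 lam L c1 M w (f : R -> R) x y tau k Nr :
  Lgood lam L -> Wgood lam c1 M w -> 0 < c1 -> 0 <= M -> M < Nr -> 0 <= k ->
  tau <= x -> x <= y -> ex_RInt f x y ->
  (forall s, x < s < y -> f s <= k * exp (Nr * (tau - s)) * w s) ->
  RInt f x y <= k * w tau / (Nr - M).
Proof.
  intros HL HW Hc HM HMN Hk Htx Hxy Hf Hb.
  pose proof HW as [Hp [Hl Hu]]. pose proof HL as [HL1 HL2].
  set (D := Nr - M). assert (HD : 0 < D) by (unfold D; lra).
  set (Lip := w y * M * exp (M * (y - x))).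
  eapply Rle_trans.
  - apply (LG lam f (fun s => - (k * exp (Nr * (tau - s)) * w s) / D) x y
             (k * (Lip + w y * D)) (lam_ex lam L HL) Hxy Hf).
    intros u v H1 H2 H3.
    exists (k * exp (Nr * (tau - u)) * w v), 0. split.
    + intros s Hs. eapply Rle_trans. apply Hb; lra.
      assert (A1 : exp (Nr * (tau - s)) <= exp (Nr * (tau - u))) by (apply exp_le_exp; nra).
      assert (A2 : w s <= w v) by (apply (w_mono lam L c1 M w); auto; lra).
      assert (A4 := Hp s). assert (A5 := exp_pos (Nr * (tau - s))).
      assert (k * exp (Nr * (tau - s)) * w s <= k * exp (Nr * (tau - u)) * w v).
      { rewrite !Rmult_assoc. apply Rmult_le_compat_l; auto.
        apply Rmult_le_compat; lra. }
      lra.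
    + cbv beta. set (h := v - u).
      assert (Hlip := w_lip lam L c1 M w x y u v HL HW Hc HM H1 H2 H3). fold Lip h in Hlip.
      assert (Hwu := Hp u). assert (Hwv := w_mono lam L c1 M w u v HL HW Hc H2).
      assert (Hwy := w_mono lam L c1 M w v y HL HW Hc H3).
      assert (Hh : 0 <= h) by (unfold h; lra).
      set (E := exp (Nr * (tau - u))).
      assert (HE : 0 < E) by apply exp_pos.
      assert (HE1 : E <= 1) by (unfold E; rewrite <- exp_0; apply exp_le_exp; nra).
      assert (Ev : exp (Nr * (tau - v)) = E * exp (- (Nr * h))) by
        (unfold E, h; rewrite <- exp_plus; f_equal; ring).
      assert (Hup : w v <= w u * exp (M * h)) by (apply Hu; lra).
      assert (EM : exp (- (Nr * h)) * exp (M * h) = exp (- (D * h))) by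
        (rewrite <- exp_plus; f_equal; unfold D; ring).
      set (F := exp (- (D * h))).
      assert (HF : 0 < F) by apply exp_pos.
      assert (Hn := exp_pos (- (Nr * h))).
      assert (G1 : exp (- (Nr * h)) * w v <= F * w u).
      { fold F in EM. rewrite <- EM.
        replace (exp (- (Nr * h)) * exp (M * h) * w u) with (exp (- (Nr * h)) * (w u * exp (M * h))) by ring.
        apply Rmult_le_compat_l; lra. }
      assert (G2 := e4 (D * h)). fold F in G2.
      assert (G3 := e3 (D * h)). fold F in G3.
      assert (HF1 : 0 <= D * h * F) by (apply Rmult_le_pos; [apply Rmult_le_pos|]; lra).
      rewrite Ev.
      assert (X1 : k * E * w u * h * F <= (- (k * (E * exp (- (Nr * h))) * w v) / D - - (k * E * w u) / D)).
      { assert (Eq : - (k * (E * exp (- (Nr * h))) * w v) / D - - (k * E * w u) / D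
                 = k * E * (w u - exp (- (Nr * h)) * w v) / D) by (field; lra).
        rewrite Eq.
        apply (Rmult_le_reg_r D); auto.
        replace (k * E * (w u - exp (- (Nr * h)) * w v) / D * D)
          with (k * E * (w u - exp (- (Nr * h)) * w v)) by (field; lra).
        assert (w u * (D * h * F) <= w u * (1 - F)) by (apply Rmult_le_compat_l; lra).
        assert (k * E * (w u * (D * h * F)) <= k * E * (w u - exp (- (Nr * h)) * w v)).
        { apply Rmult_le_compat_l. apply Rmult_le_pos; lra. lra. }
        assert (k * E * w u * h * F * D = k * E * (w u * (D * h * F))) by ring.
        lra. }
      assert (X2 : k * E * w v * h - k * E * w u * h * F <= k * (Lip + w y * D) * h ^ 2).
      { assert (Eq : k * E * w v * h - k * E * w u * h * F = k * E * h * ((w v - w u) + w u * (1 - F))) by ring.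
        rewrite Eq.
        assert (B1 : (w v - w u) + w u * (1 - F) <= Lip * h + w y * (D * h)).
        { assert (w u * (1 - F) <= w y * (D * h)).
          { apply Rmult_le_compat; lra. }
          lra. }
        assert (B0 : 0 <= (w v - w u) + w u * (1 - F)).
        { assert (0 <= w u * (1 - F)) by (apply Rmult_le_pos; lra). lra. }
        assert (k * E * h * ((w v - w u) + w u * (1 - F)) <= k * 1 * h * (Lip * h + w y * (D * h))).
        { apply Rmult_le_compat; try lra.
          apply Rmult_le_pos; [apply Rmult_le_pos|]; lra.
          apply Rmult_le_compat_r; [lra|]. apply Rmult_le_compat_l; lra. }
        assert (k * 1 * h * (Lip * h + w y * (D * h)) = k * (Lip + w y * D) * h ^ 2) by ring.
        lra. }
      fold h. fold E. lra.
  - cbv beta.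
    assert (Z1 := Hp x). assert (Z2 := Hp y). assert (Z3 := exp_pos (Nr * (tau - y))).
    assert (Z4 := exp_pos (Nr * (tau - x))).
    assert (0 <= k * exp (Nr * (tau - y)) * w y) by (apply Rmult_le_pos; [apply Rmult_le_pos|]; lra).
    assert (Hx := Hu tau x Htx).
    assert (Eq : exp (Nr * (tau - x)) * exp (M * (x - tau)) = exp (- (D * (x - tau)))) by
      (rewrite <- exp_plus; f_equal; unfold D; ring).
    assert (Hle : exp (- (D * (x - tau))) <= 1) by (rewrite <- exp_0; apply exp_le_exp; nra).
    assert (exp (Nr * (tau - x)) * w x <= w tau).
    { assert (exp (Nr * (tau - x)) * w x <= exp (Nr * (tau - x)) * (w tau * exp (M * (x - tau)))) by
        (apply Rmult_le_compat_l; lra).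
      assert (Hwt := Hp tau). nra. }
    assert (W : - (k * exp (Nr * (tau - y)) * w y) / D <= 0).
    { unfold Rdiv. assert (0 < / D) by (apply Rinv_0_lt_compat; lra). nra. }
    assert (W2 : - - (k * exp (Nr * (tau - x)) * w x) / D <= k * w tau / D).
    { unfold Rdiv. assert (0 < / D) by (apply Rinv_0_lt_compat; lra).
      assert (k * (exp (Nr * (tau - x)) * w x) <= k * w tau) by (apply Rmult_le_compat_l; lra).
      nra. }
    lra.
Qed.

Lemma exp_pow z n : exp z ^ n = exp (INR n * z).
Proof.
  induction n as [|n IH].
  - simpl. rewrite Rmult_0_l, exp_0. reflexivity.
  - rewrite <- tech_pow_Rmult, IH, S_INR, <- exp_plus. f_equal. ring.
Qed.

Lemma Q_bnd N z : 0 < z -> 0 <= Q N 0 z <= 1.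
Proof.
  intros Hz. unfold Q. destruct (Rle_dec z 1).
  - split. apply pow_le; lra. rewrite <- (pow1 N). apply pow_incr. lra.
  - simpl. lra.
Qed.

Lemma Q_left N t tau : tau < t -> Q N 0 (exp (t - tau)) = 1.
Proof.
  intros H. unfold Q. destruct (Rle_dec (exp (t - tau)) 1) as [r|r].
  - exfalso. assert (exp 0 < exp (t - tau)) by (apply exp_increasing; lra). rewrite exp_0 in H0. lra.
  - reflexivity.
Qed.

Lemma Q_right N t tau : t <= tau -> Q N 0 (exp (t - tau)) = exp (INR N * (t - tau)).
Proof.
  intros H. unfold Q. destruct (Rle_dec (exp (t - tau)) 1) as [r|r].
  - apply exp_pow.
  - exfalso. apply r. rewrite <- exp_0. apply exp_le_exp. lra.
Qed.

Lemma inner_left lam L c1 c2 N w t tau x y :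
  Lgood lam L -> Wgood lam c1 (INR N - c2 * L) w -> 0 < c1 -> 0 < c2 -> 0 < L ->
  0 <= INR N - c2 * L ->
  x <= y -> y <= tau -> ex_RInt (fun s => E3 lam N t tau s * w s) x y ->
  RInt (fun s => E3 lam N t tau s * w s) x y <=
    Q N 0 (exp (t - tau)) * lam tau * w tau * (L + 1 / c1).
Proof.
  intros HL HW Hc1 Hc2 HL0 HM Hxy Hyt Hex.
  set (q := Q N 0 (exp (t - tau))).
  assert (Hq := Q_bnd N (exp (t - tau)) (exp_pos _)). fold q in Hq.
  pose proof HL as [HL1 HL2]. pose proof HW as [Hp _].
  assert (Hlt := HL1 tau).
  eapply Rle_trans.
  - apply (IT2 lam L c1 (INR N - c2 * L) w _ x y tau (q * lam tau ^ 2) (q * lam tau)); auto.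
    + apply Rmult_le_pos; [lra|]. apply pow_le; lra.
    + apply Rmult_le_pos; lra.
    + intros s Hs. unfold E3, E2. fold q. destruct (Rle_dec tau s) as [r|r]; [lra|].
      right. ring.
  - assert (Hwy := w_mono lam L c1 (INR N - c2 * L) w y tau HL HW Hc1 Hyt).
    assert (Hwt := Hp tau). assert (Hwy' := Hp y).
    assert (A1 : q * lam tau ^ 2 * w tau <= q * lam tau * w tau * L).
    { replace (q * lam tau ^ 2 * w tau) with (q * lam tau * w tau * lam tau) by ring.
      apply Rmult_le_compat_l; [|lra]. apply Rmult_le_pos; [apply Rmult_le_pos|]; lra. }
    assert (A2 : q * lam tau * w y / c1 <= q * lam tau * w tau * (1 / c1)).
    { unfold Rdiv. rewrite Rmult_1_l. apply Rmult_le_compat_r.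
      left; apply Rinv_0_lt_compat; lra.
      apply Rmult_le_compat_l; [apply Rmult_le_pos|]; lra. }
    lra.
Qed.

Lemma inner_right lam L c1 c2 N w t tau x y :
  Lgood lam L -> Wgood lam c1 (INR N - c2 * L) w -> 0 < c1 -> 0 < c2 -> 0 < L ->
  0 <= INR N - c2 * L ->
  tau <= x -> x <= y -> ex_RInt (fun s => E3 lam N t tau s * w s) x y ->
  RInt (fun s => E3 lam N t tau s * w s) x y <=
    Q N 0 (exp (t - tau)) * lam tau * w tau * (1 / c2).
Proof.
  intros HL HW Hc1 Hc2 HL0 HM Htx Hxy Hex.
  set (q := Q N 0 (exp (t - tau))).
  assert (Hq := Q_bnd N (exp (t - tau)) (exp_pos _)). fold q in Hq.
  pose proof HL as [HL1 HL2]. pose proof HW as [Hp _].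
  assert (Hlt := HL1 tau).
  eapply Rle_trans.
  - apply (IT3 lam L c1 (INR N - c2 * L) w _ x y tau (q * lam tau ^ 2) (INR N)); auto.
    + assert (0 < c2 * L) by nra. lra.
    + apply Rmult_le_pos; [lra|]. apply pow_le; lra.
    + intros s Hs. unfold E3, E2. fold q. destruct (Rle_dec tau s) as [r|r]; [|lra].
      right. ring.
  - replace (INR N - (INR N - c2 * L)) with (c2 * L) by ring.
    assert (Hwt := Hp tau).
    assert (E1 : q * lam tau ^ 2 * w tau / (c2 * L) = (q * lam tau * w tau * (1 / c2)) * (lam tau / L))
      by (field; lra).
    rewrite E1.
    assert (0 <= q * lam tau * w tau * (1 / c2)).
    { apply Rmult_le_pos; [apply Rmult_le_pos; [apply Rmult_le_pos|]|]; try lra.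
      unfold Rdiv; rewrite Rmult_1_l; left; apply Rinv_0_lt_compat; lra. }
    assert (lam tau / L <= 1).
    { unfold Rdiv. apply (Rmult_le_reg_r L); auto. rewrite Rmult_assoc, Rinv_l; lra. }
    nra.
Qed.

Lemma inner lam L c1 c2 N w t tau c d :
  Lgood lam L -> Wgood lam c1 (INR N - c2 * L) w -> 0 < c1 -> 0 < c2 -> 0 < L ->
  0 <= INR N - c2 * L -> c <= d ->
  Defs.RInt (fun s => E3 lam N t tau s * w s) c d <=
    Q N 0 (exp (t - tau)) * lam tau * w tau * (L + 1 / c1 + 1 / c2).
Proof.
  intros HL HW Hc1 Hc2 HL0 HM Hcd.
  set (g := fun s => E3 lam N t tau s * w s).
  set (q := Q N 0 (exp (t - tau))).
  assert (Hq := Q_bnd N (exp (t - tau)) (exp_pos _)). fold q in Hq.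
  pose proof HL as [HL1 HL2]. pose proof HW as [Hp _].
  assert (Hlt := HL1 tau). assert (Hwt := Hp tau).
  assert (P0 : 0 <= q * lam tau * w tau) by (apply Rmult_le_pos; [apply Rmult_le_pos|]; lra).
  assert (P1 : 0 < / c1) by (apply Rinv_0_lt_compat; lra).
  assert (P2 : 0 < / c2) by (apply Rinv_0_lt_compat; lra).
  assert (B1 : 0 <= q * lam tau * w tau * (L + 1 / c1)) by (apply Rmult_le_pos; [lra|]; unfold Rdiv; lra).
  assert (B2 : 0 <= q * lam tau * w tau * (1 / c2)) by (apply Rmult_le_pos; [lra|]; unfold Rdiv; lra).
  assert (Esum : q * lam tau * w tau * (L + 1 / c1 + 1 / c2) =
     q * lam tau * w tau * (L + 1 / c1) + q * lam tau * w tau * (1 / c2)) by ring.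
  destruct (classic (ex_RInt g c d)) as [Hex|Hn].
  2:{ rewrite (DR_ne g c d Hn). lra. }
  rewrite (DR_eq g c d Hex).
  destruct (Rle_dec tau c) as [H1|H1].
  { assert (H := inner_right lam L c1 c2 N w t tau c d HL HW Hc1 Hc2 HL0 HM H1 Hcd Hex).
    fold g q in H. lra. }
  destruct (Rle_dec d tau) as [H2|H2].
  { assert (H := inner_left lam L c1 c2 N w t tau c d HL HW Hc1 Hc2 HL0 HM Hcd H2 Hex).
    fold g q in H. lra. }
  rewrite (RInt_split g c tau d).
  2: apply (ex_sub g c d); auto; lra.
  2: apply (ex_sub g c d); auto; lra.
  assert (H := inner_left lam L c1 c2 N w t tau c tau HL HW Hc1 Hc2 HL0 HM ltac:(lra) ltac:(lra)
      ltac:(apply (ex_sub g c d); auto; lra)).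
  assert (H' := inner_right lam L c1 c2 N w t tau tau d HL HW Hc1 Hc2 HL0 HM ltac:(lra) ltac:(lra)
      ltac:(apply (ex_sub g c d); auto; lra)).
  fold g q in H, H'. lra.
Qed.

Lemma outer lam L c1 c2 N w t a b c d :
  Lgood lam L -> Wgood lam c1 (INR N - c2 * L) w -> 0 < c1 -> 0 < c2 -> 0 < L ->
  0 <= INR N - c2 * L -> c <= d -> a <= b ->
  Defs.RInt (fun tau => Defs.RInt (fun s => E3 lam N t tau s * w s) c d) a b <=
    (L + 1 / c1 + 1 / c2) * (1 / c1 + 1 / c2) * w t.
Proof.
  intros HL HW Hc1 Hc2 HL0 HM Hcd Hab.
  set (G := fun tau => Defs.RInt (fun s => E3 lam N t tau s * w s) c d).
  set (A := L + 1 / c1 + 1 / c2).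
  pose proof HL as [HL1 HL2]. pose proof HW as [Hp _].
  assert (P1 : 0 < / c1) by (apply Rinv_0_lt_compat; lra).
  assert (P2 : 0 < / c2) by (apply Rinv_0_lt_compat; lra).
  assert (HA : 0 < A) by (unfold A, Rdiv; lra).
  assert (Hwt := Hp t).
  assert (B1 : 0 <= A * w t / c1) by (unfold Rdiv; apply Rmult_le_pos; [apply Rmult_le_pos|]; lra).
  assert (B2 : 0 <= A * w t / c2) by (unfold Rdiv; apply Rmult_le_pos; [apply Rmult_le_pos|]; lra).
  assert (Esum : A * (1 / c1 + 1 / c2) * w t = A * w t / c1 + A * w t / c2) by (field; lra).
  rewrite Esum.
  assert (Gb : forall tau, G tau <= Q N 0 (exp (t - tau)) * lam tau * w tau * A).
  { intros tau. apply inner; auto. }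
  assert (OL : forall x y, x <= y -> y <= t -> ex_RInt G x y -> RInt G x y <= A * w t / c1).
  { intros x y Hxy Hyt Hex. eapply Rle_trans.
    - apply (IT2 lam L c1 (INR N - c2 * L) w G x y y 0 A); auto; try lra.
      intros s Hs. eapply Rle_trans. apply Gb. rewrite Q_left by lra.
      right. ring.
    - assert (Hwy := w_mono lam L c1 (INR N - c2 * L) w y t HL HW Hc1 Hyt).
      assert (Hwy' := Hp y).
      assert (A * w y / c1 <= A * w t / c1).
      { unfold Rdiv. apply Rmult_le_compat_r; [lra|]. apply Rmult_le_compat_l; lra. }
      lra. }
  assert (OR : forall x y, t <= x -> x <= y -> ex_RInt G x y -> RInt G x y <= A * w t / c2).
  { intros x y Htx Hxy Hex. eapply Rle_trans.
    - apply (IT3 lam L c1 (INR N - c2 * L) w G x y t (A * L) (INR N)); auto; try nra.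
      intros s Hs. eapply Rle_trans. apply Gb. rewrite Q_right by lra.
      assert (Hl := HL1 s). assert (Hws := Hp s). assert (He := exp_pos (INR N * (t - s))).
      assert (exp (INR N * (t - s)) * w s * A * lam s <= exp (INR N * (t - s)) * w s * A * L).
      { apply Rmult_le_compat_l; [|lra]. apply Rmult_le_pos; [apply Rmult_le_pos|]; lra. }
      nra.
    - replace (INR N - (INR N - c2 * L)) with (c2 * L) by ring.
      right. field. lra. }
  destruct (classic (ex_RInt G a b)) as [Hex|Hn].
  2:{ rewrite (DR_ne G a b Hn). lra. }
  rewrite (DR_eq G a b Hex).
  destruct (Rle_dec t a) as [H1|H1].
  { assert (H := OR a b H1 Hab Hex). lra. }
  destruct (Rle_dec b t) as [H2|H2].
  { assert (H := OL a b Hab H2 Hex). lra. }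
  rewrite (RInt_split G a t b).
  2: apply (ex_sub G a b); auto; lra.
  2: apply (ex_sub G a b); auto; lra.
  assert (H := OL a t ltac:(lra) ltac:(lra) ltac:(apply (ex_sub G a b); auto; lra)).
  assert (H' := OR t b ltac:(lra) ltac:(lra) ltac:(apply (ex_sub G a b); auto; lra)).
  lra.
Qed.

Lemma lamc lam L c1 M p q : Lgood lam L -> 0 < c1 -> c1 * L <= 1/2 -> 1/2 <= M -> p <= q ->
  0 <= c1 * RInt lam p q <= M * (q - p).
Proof.
  intros HL Hc HcL HM Hpq. destruct (lam_bnd lam L p q HL Hpq) as [H1 H2].
  split. nra.
  assert (c1 * RInt lam p q <= c1 * (L * (q - p))) by (apply Rmult_le_compat_l; lra).
  nra.
Qed.

Lemma exp_le_mul a b c : a + b <= c -> exp a * exp b <= exp c.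
Proof. intros H. rewrite <- exp_plus. apply exp_le_exp. exact H. Qed.

Lemma exp_le_mul' a b c : a <= b + c -> exp a <= exp b * exp c.
Proof. intros H. rewrite <- exp_plus. apply exp_le_exp. exact H. Qed.

Lemma Wp_good lam L c1 M s : Lgood lam L -> 0 < c1 -> c1 * L <= 1/2 -> 1/2 <= M ->
  Wgood lam c1 M (fun sg => Sig lam c1 M 1 s sg).
Proof.
  intros HL Hc HcL HM. assert (Hex := lam_ex lam L HL).
  assert (Ch : forall p q r, RInt lam p r = RInt lam p q + RInt lam q r) by
    (intros; apply RInt_split; auto).
  unfold Sig. split; [|split].
  - intros x. destruct (Rle_dec s x); apply exp_pos.
  - intros x y Hxy. destruct (Rle_dec s x) as [H1|H1]; destruct (Rle_dec s y) as [H2|H2];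
      try rewrite (DR_eq lam s x (Hex s x)); try rewrite (DR_eq lam s y (Hex s y));
      first [apply exp_le_mul | apply exp_le_mul'].
    + rewrite (Ch s x y). lra.
    + lra.
    + rewrite (Ch x s y). assert (A := lamc lam L c1 M x s HL Hc HcL HM ltac:(lra)). lra.
    + assert (A := lamc lam L c1 M x y HL Hc HcL HM ltac:(lra)). lra.
  - intros x y Hxy. destruct (Rle_dec s x) as [H1|H1]; destruct (Rle_dec s y) as [H2|H2];
      try rewrite (DR_eq lam s x (Hex s x)); try rewrite (DR_eq lam s y (Hex s y));
      first [apply exp_le_mul | apply exp_le_mul'].
    + rewrite (Ch s x y). assert (A := lamc lam L c1 M x y HL Hc HcL HM ltac:(lra)). lra.
    + lra.
    + assert (A := lamc lam L c1 M s y HL Hc HcL HM ltac:(lra)). lra.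
    + lra.
Qed.

Lemma Wm_good lam L c1 M s : Lgood lam L -> 0 < c1 -> c1 * L <= 1/2 -> 1/2 <= M ->
  Wgood lam c1 M (fun sg => Sig lam c1 M (-1) sg s).
Proof.
  intros HL Hc HcL HM. assert (Hex := lam_ex lam L HL).
  assert (Ch : forall p q r, RInt lam p r = RInt lam p q + RInt lam q r) by
    (intros; apply RInt_split; auto).
  unfold Sig. split; [|split].
  - intros x. destruct (Rle_dec x s); apply exp_pos.
  - intros x y Hxy. destruct (Rle_dec x s) as [H1|H1]; destruct (Rle_dec y s) as [H2|H2];
      try rewrite (DR_eq lam x s (Hex x s)); try rewrite (DR_eq lam y s (Hex y s));
      first [apply exp_le_mul | apply exp_le_mul'].
    + rewrite (Ch x y s). lra.
    + rewrite (Ch x s y). assert (A := lamc lam L c1 M s y HL Hc HcL HM ltac:(lra)). lra.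
    + lra.
    + assert (A := lamc lam L c1 M x y HL Hc HcL HM ltac:(lra)). lra.
  - intros x y Hxy. destruct (Rle_dec x s) as [H1|H1]; destruct (Rle_dec y s) as [H2|H2];
      try rewrite (DR_eq lam x s (Hex x s)); try rewrite (DR_eq lam y s (Hex y s));
      first [apply exp_le_mul | apply exp_le_mul'].
    + rewrite (Ch x y s). assert (A := lamc lam L c1 M x y HL Hc HcL HM ltac:(lra)). lra.
    + assert (A := lamc lam L c1 M x s HL Hc HcL HM ltac:(lra)). lra.
    + lra.
    + lra.
Qed.

Theorem lemma3p6 (N : nat) (Lambda0 c1 c2 : R) (lam : R -> R) :
  (2 <= N)%nat -> 0 < Lambda0 ->
  (forall x, 0 <= lam x <= Lambda0) ->
  (forall x y, x <= y -> lam y <= lam x) ->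
  0 < c1 -> 0 < c2 ->
  c1 * Lambda0 <= 1/2 -> c2 * Lambda0 <= (INR N - 1) / 2 ->
  let M := INR N - c2 * Lambda0 in
  let c := 2 * (3 * Lambda0 / M + 1 / c1 + 1 / c2) ^ 2 in
  forall s t : R,
    dbl_int_le (fun tau sigma => E3 lam N t tau sigma * Sig lam c1 M 1 s sigma)
      (c * Sig lam c1 M 1 s t) /\
    dbl_int_le (fun tau sigma => E3 lam N t tau sigma * Sig lam c1 M (-1) sigma s)
      (c * Sig lam c1 M (-1) t s).
Proof.
  intros HN HL0 Hl1 Hl2 Hc1 Hc2 HcL Hc2L M c s t.
  assert (HL : Lgood lam Lambda0) by (split; auto).
  assert (HNr : 2 <= INR N) by (apply (le_INR 2 N) in HN; simpl in HN; lra).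
  assert (HM : 1/2 <= M) by (unfold M; lra).
  assert (HMpos : 0 <= INR N - c2 * Lambda0) by (fold M; lra).
  assert (P1 : 0 < / c1) by (apply Rinv_0_lt_compat; lra).
  assert (P2 : 0 < / c2) by (apply Rinv_0_lt_compat; lra).
  assert (Hcc : (Lambda0 + 1 / c1 + 1 / c2) * (1 / c1 + 1 / c2) <= c).
  { unfold c. assert (0 <= 3 * Lambda0 / M) by (unfold Rdiv; apply Rmult_le_pos; [lra|];
       left; apply Rinv_0_lt_compat; lra).
    assert (Lambda0 <= (1/c1) / 2).
    { unfold Rdiv. rewrite Rmult_1_l. apply (Rmult_le_reg_l c1); auto.
      replace (c1 * (/ c1 * / 2)) with (/2) by (field; lra). lra. }
    unfold Rdiv in *. rewrite !Rmult_1_l in *. nra. }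
  assert (Gen : forall w, Wgood lam c1 M w ->
    dbl_int_le (fun tau sigma => E3 lam N t tau sigma * w sigma) (c * w t)).
  { intros w HW a b cc d Hab Hcd.
    eapply Rle_trans.
    apply (outer lam Lambda0 c1 c2 N w t a b cc d HL HW Hc1 Hc2 HL0 HMpos Hcd Hab).
    pose proof HW as [Hp _]. assert (Hw := Hp t). nra. }
  split.
  - apply (Gen (fun sg => Sig lam c1 M 1 s sg)). apply (Wp_good lam Lambda0); auto.
  - apply (Gen (fun sg => Sig lam c1 M (-1) sg s)). apply (Wm_good lam Lambda0); auto.
Qed.
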